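(* Let $M$ be a Sidon set in $\mathbb{F}_2^t$ with $|M|\geq 3$. Then the following are equivalent: (a) $M$ is maximal; (b) $S_3(M) = \mathbb{F}_2^t$; (c) $S_3^*(M)\cup M = \mathbb{F}_2^t$ and $S_3^*(M)\cap M = \emptyset$. Here $S_3(M)=\{m_1+m_2+m_3 : m_1,m_2,m_3\in M\}$ and $S_3^*(M)=\{m_1+m_2+m_3 : m_1,m_2,m_3\in M \text{ pairwise distinct}\}$.
   Context: $\mathbb{F}_2^t$ is the $t$-dimensional vector space over $\mathbb{F}_2$. A subset $M\subseteq \mathbb{F}_2^t$ is Sidon if $m_1+m_2\neq m_3+m_4$ for all pairwise distinct $m_1,m_2,m_3,m_4\in M$. A Sidon set $M$ is maximal if $M=S$ for every Sidon set $S$ with $M\subseteq S\subseteq\mathbb{F}_2^t$. *)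

(* Defs.v *)
From mathcomp Require Import all_boot all_algebra.
Set Implicit Arguments. Unset Strict Implicit. Unset Printing Implicit Defensive.
Import GRing.Theory.
Local Open Scope ring_scope.

Notation F2t t := 'rV['F_2]_t.

Definition sidon (t : nat) (M : {set F2t t}) : Prop :=
  forall m1 m2 m3 m4, m1 \in M -> m2 \in M -> m3 \in M -> m4 \in M ->
    m1 != m2 -> m1 != m3 -> m1 != m4 -> m2 != m3 -> m2 != m4 -> m3 != m4 ->
    m1 + m2 != m3 + m4.

Definition maximal_sidon (t : nat) (M : {set F2t t}) : Prop :=
  sidon M /\ forall S : {set F2t t}, sidon S -> M \subset S -> S = M.

Definition S3 (t : nat) (M : {set F2t t}) : {set F2t t} :=
  [set x | [exists m1 in M, exists m2 in M, exists m3 in M, x == m1 + m2 + m3]].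

Definition S3star (t : nat) (M : {set F2t t}) : {set F2t t} :=
  [set x | [exists m1 in M, exists m2 in M, exists m3 in M,
     [&& m1 != m2, m1 != m3, m2 != m3 & x == m1 + m2 + m3]]].

(* Main.v *)
Require Import Defs.
From mathcomp Require Import all_boot all_algebra.
Local Open Scope ring_scope.
Import GRing.Theory.

Lemma addxx t (x : 'rV['F_2]_t) : x + x = 0.
Proof. apply/rowP=> i; rewrite !mxE; move: (x 0 i) => a; apply/val_inj.
case: a => [[|[|k]] Hk] //=. Qed.

Lemma rearr t (a b c d : 'rV['F_2]_t) : a + b = c + d -> a = b + c + d.
Proof. by move=> h; rewrite -addrA -h addrCA addxx addr0. Qed.

Lemma S3E t (M : {set 'rV['F_2]_t}) : S3 M = S3star M :|: M.
Proof.
apply/setP=> x; rewrite !inE; apply/idP/idP.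
  move/exists_inP=> [a aM /exists_inP [b bM /exists_inP [c cM /eqP ->]]].
  case: (eqVneq a b) => [<-|ab]; first by rewrite addxx add0r cM orbT.
  case: (eqVneq a c) => [<-|ac]; first by rewrite addrAC addxx add0r bM orbT.
  case: (eqVneq b c) => [<-|bc]; first by rewrite -addrA addxx addr0 aM orbT.
  apply/orP; left; apply/exists_inP; exists a => //; apply/exists_inP; exists b => //.
  apply/exists_inP; exists c => //; by rewrite ab ac bc eqxx.
case/orP => [/exists_inP [a aM /exists_inP [b bM /exists_inP [c cM /and4P [_ _ _ /eqP ->]]]] | xM].
  apply/exists_inP; exists a => //; apply/exists_inP; exists b => //.
  by apply/exists_inP; exists c.
apply/exists_inP; exists x => //; apply/exists_inP; exists x => //.
by apply/exists_inP; exists x => //; rewrite addxx add0r.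
Qed.

Lemma star_disj t (M : {set 'rV['F_2]_t}) : sidon M -> S3star M :&: M = set0.
Proof.
move=> sM; apply/setP=> x; rewrite !inE; apply/negbTE/negP.
move=> /andP [/exists_inP [a aM /exists_inP [b bM /exists_inP [c cM /and4P [ab ac bc /eqP hx]]]] xM].
have h0 : forall u v : 'rV['F_2]_t, u + v = 0 -> u = v.
  by move=> u v h; rewrite -[u]addr0 -h addrA addxx add0r.
case: (eqVneq x a) => [ea|xa].
  move: hx; rewrite ea -addrA -{1}[a]addr0 => /(addrI a) /esym /h0 e.
  by rewrite e eqxx in bc.
case: (eqVneq x b) => [eb|xb].
  move: hx; rewrite eb addrAC -{1}[b]add0r => /(addIr b) /esym /h0 e.
  by rewrite e eqxx in ac.
case: (eqVneq x c) => [ec|xc].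
  move: hx; rewrite ec -{1}[c]add0r => /(addIr c) /esym /h0 e.
  by rewrite e eqxx in ab.
have := sM x a b c xM aM bM cM xa xb xc ab ac bc.
by rewrite hx -[a + b + c]addrA addrC -[b + c + a + a]addrA addxx addr0 eqxx.
Qed.

Lemma addS3 t (M : {set 'rV['F_2]_t}) x : sidon M -> x \notin S3star M -> sidon (x |: M).
Proof.
move=> sM xS.
have key : forall a b c, a \in M -> b \in M -> c \in M -> a != b -> a != c -> b != c ->
    x != a + b + c.
  move=> a b c aM bM cM ab ac bc; apply: contra xS => /eqP ->; rewrite inE.
  apply/exists_inP; exists a => //; apply/exists_inP; exists b => //.
  by apply/exists_inP; exists c => //; rewrite ab ac bc eqxx.
move=> m1 m2 m3 m4 h1 h2 h3 h4 d12 d13 d14 d23 d24 d34.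
rewrite !in_setU1 in h1 h2 h3 h4.
case/predU1P: h1 => [e1|h1].
  subst m1.
  have h2' : m2 \in M by case/predU1P: h2 => [e|//]; rewrite e eqxx in d12.
  have h3' : m3 \in M by case/predU1P: h3 => [e|//]; rewrite e eqxx in d13.
  have h4' : m4 \in M by case/predU1P: h4 => [e|//]; rewrite e eqxx in d14.
  apply: contra (key m2 m3 m4 h2' h3' h4' d23 d24 d34) => /eqP h.
  by apply/eqP; apply: rearr.
case/predU1P: h2 => [e2|h2].
  subst m2.
  have h3' : m3 \in M by case/predU1P: h3 => [e|//]; rewrite e eqxx in d23.
  have h4' : m4 \in M by case/predU1P: h4 => [e|//]; rewrite e eqxx in d24.
  apply: contra (key m1 m3 m4 h1 h3' h4' d13 d14 d34) => /eqP h.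
  by apply/eqP; apply: rearr; rewrite addrC.
case/predU1P: h3 => [e3|h3].
  subst m3.
  have h4' : m4 \in M by case/predU1P: h4 => [e|//]; rewrite e eqxx in d34.
  apply: contra (key m4 m1 m2 h4' h1 h2 _ _ d12) => [/eqP h||].
  - by apply/eqP; apply: rearr; rewrite h.
  - by rewrite eq_sym.
  - by rewrite eq_sym.
case/predU1P: h4 => [e4|h4].
  subst m4.
  apply: contra (key m3 m1 m2 h3 h1 h2 _ _ d12) => [/eqP h||].
  - by apply/eqP; apply: rearr; rewrite addrC h.
  - by rewrite eq_sym.
  - by rewrite eq_sym.
exact: sM.
Qed.

Lemma star_mono t (M S : {set 'rV['F_2]_t}) x :
  M \subset S -> x \in S3star M -> x \in S3star S.
Proof.
move=> /subsetP MS; rewrite !inE.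
move=> /exists_inP [a aM /exists_inP [b bM /exists_inP [c cM h]]].
apply/exists_inP; exists a; first exact: MS.
apply/exists_inP; exists b; first exact: MS.
by apply/exists_inP; exists c; first exact: MS.
Qed.

Theorem proposition1p5 (t : nat) (M : {set 'rV['F_2]_t}) :
  sidon M -> (3 <= #|M|)%N ->
  (maximal_sidon M <-> S3 M = [set: 'rV['F_2]_t]) /\
  (S3 M = [set: 'rV['F_2]_t] <->
     (S3star M :|: M = [set: 'rV['F_2]_t] /\ S3star M :&: M = set0)).
Proof.
move=> sM _; split; split.
- case=> _ maxM; apply/setP => x; rewrite S3E in_setT in_setU.
  case xM: (x \in M); first by rewrite orbT.
  rewrite orbF; apply/negPn/negP => xS.
  have := maxM (x |: M) (@addS3 _ M x sM xS) (subsetUr _ _).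
  by move/setP/(_ x); rewrite in_setU1 eqxx xM.
- move=> h; split=> // S sS MS.
  apply/eqP; rewrite eqEsubset MS andbT; apply/subsetP => x xS.
  apply/negPn/negP => xM.
  have : x \in S3 M by rewrite h in_setT.
  rewrite S3E in_setU (negbTE xM) orbF => /(@star_mono _ _ _ x MS) xst.
  have : x \in S3star S :&: S by rewrite inE xst xS.
  by rewrite star_disj // inE.
- by move=> h; split; [rewrite -S3E | exact: star_disj].
- by case=> h _; rewrite S3E.
Qed.
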